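(* Let $G$ be a graph and let $v$ be a cut vertex of $G$ which decomposes $G$ into $G_1=G(V_1)$ and $H=G(U)$. If $H$ is a tree, then for every divisor $f$ on $G$ we have $\rho_G(f)=\rho_{G_1}(f_{G/H})$.
   Context: Graphs are finite, undirected, connected, loopless, possibly with multiple edges; $G(W)$ denotes the subgraph induced by $W\subseteq V(G)$. A vertex $v$ is a cut vertex if removing it disconnects $G$; it decomposes $G$ into $G_1=G(V_1)$ and $H=G(U)$ if $V(G)=V_1\cup U$, $V_1\cap U=\{v\}$, both induced subgraphs are connected, and no edge joins $V_1\setminus\{v\}$ to $U\setminus\{v\}$. For a divisor $f$ on $G$ (a function $V(G)\to\mathbb{Z}$), the contraction $f_{G/H}$ is the divisor on $G_1$ with $f_{G/H}(u)=f(u)$ for $u\in V_1\setminus\{v\}$ and $f_{G/H}(v)=\sum_{u\in U}f(u)$. Degree: $\deg(f)=\sum f(v)$. Laplacian $\Delta_G$: $\Delta_G(u,u)=\deg(u)$, $\Delta_G(u,w)=-e(u,w)$ (number of edges) for $u\ne w$. $f\sim g$ if $g=f+x\Delta_G$ for some $x\in\mathbb{Z}^{V(G)}$. Effective: all values $\ge0$; L-effective: linearly equivalent to an effective divisor. The rank $\rho_G(f)$ is $-1$ if $f$ is not L-effective, and otherwise the largest integer $r\ge0$ such that $f-\lambda$ is L-effective for every effective $\lambda$ of degree $r$ on $G$. $\rho_{G_1}$ is the rank computed in the graph $G_1$. *)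

(* Defs.v *)
From mathcomp Require Import all_boot all_order all_algebra.
Set Implicit Arguments. Unset Strict Implicit. Unset Printing Implicit Defensive.
Import Order.TTheory GRing.Theory Num.Theory.

(* A finite loopless multigraph on vertex type T is given by an edge
   multiplicity function e : T -> T -> nat (symmetric, e x x = 0).
   Induced subgraphs G(W) are handled by working relative to a vertex set
   W : {set T}; a divisor on G(W) is a function T -> int whose values
   outside W are irrelevant. *)

Section Graphs.
Variables (T : finType) (e : T -> T -> nat).

Definition loopless_sym := (forall x, e x x = 0%N) /\ (forall x y, e x y = e y x).

Definition adj_in (W : {set T}) : rel T :=
  fun a b => [&& a \in W, b \in W & (0 < e a b)%N].

Definition connected_in (W : {set T}) :=
  W != set0 /\ forall x y, x \in W -> y \in W -> connect (adj_in W) x y.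

Definition cut_vertex (v : T) :=
  ~ connected_in (setT :\ v).

Definition tree_in (U : {set T}) :=
  [/\ connected_in U,
      (forall x y, x \in U -> y \in U -> (e x y <= 1)%N) &
      ~ exists c : seq T, (2 < size c)%N /\ ucycle (adj_in U) c].

Definition decomposes (v : T) (V1 U : {set T}) :=
  [/\ V1 :|: U = setT, V1 :&: U = [set v], connected_in V1, connected_in U &
      forall x y, x \in V1 :\ v -> y \in U :\ v -> e x y = 0%N].

Local Open Scope ring_scope.

Definition lap (W : {set T}) (u w : T) : int :=
  if u == w then (\sum_(z in W) e u z)%N%:Z else - (e u w)%:Z.

Definition deg_in (W : {set T}) (f : T -> int) : int := \sum_(u in W) f u.

Definition effective_in (W : {set T}) (f : T -> int) := forall u, u \in W -> 0 <= f u.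

Definition lin_equiv_in (W : {set T}) (f g : T -> int) :=
  exists x : T -> int, forall u, u \in W -> g u = f u + \sum_(w in W) x w * lap W w u.

Definition Leffective_in (W : {set T}) (f : T -> int) :=
  exists g, lin_equiv_in W f g /\ effective_in W g.

Definition rank_prop (W : {set T}) (f : T -> int) (r : int) :=
  forall lam : T -> int, effective_in W lam -> deg_in W lam = r ->
    Leffective_in W (fun u => f u - lam u).

Definition is_rank (W : {set T}) (f : T -> int) (r : int) :=
  (~ Leffective_in W f /\ r = -1)
  \/ (Leffective_in W f /\ 0 <= r /\ rank_prop W f r /\
      forall r', 0 <= r' -> rank_prop W f r' -> r' <= r).

Definition contract (U : {set T}) (v : T) (f : T -> int) : T -> int :=
  fun u => if u == v then \sum_(w in U) f w else f u.

End Graphs.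

(* Main.v *)
Require Import Defs.
From mathcomp Require Import all_boot all_order all_algebra.
From mathcomp Require Import zify ring.
Import Order.TTheory GRing.Theory Num.Theory.
Set Implicit Arguments. Unset Strict Implicit. Unset Printing Implicit Defensive.
Local Open Scope ring_scope.

Section Tree.
Variables (T : finType) (e : T -> T -> nat).
Hypothesis Hl0 : forall x, e x x = 0%N.
Hypothesis Hsym : forall x y, e x y = e y x.

Lemma adj_neq (U : {set T}) a b : adj_in e U a b -> a != b.
Proof. by case/and3P=> _ _ h; apply/eqP => E; rewrite E Hl0 in h. Qed.

Lemma cyc (U : {set T}) x s l z : path (adj_in e U) x (rcons s l) -> uniq (x :: rcons s l) ->
  z \in x :: s -> z != last x s -> adj_in e U l z ->
  exists c, (2 < size c)%N /\ ucycle (adj_in e U) c.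
Proof.
elim: s x => [|y s IH] x hp hu hz hl ha.
  by move: hz hl; rewrite inE /= => /eqP ->; rewrite eqxx.
move: hz; rewrite inE => /orP [/eqP E|hz].
  exists (x :: rcons (y :: s) l); split; first by rewrite /= size_rcons.
  rewrite /ucycle hu andbT.
  have -> : cycle (adj_in e U) (x :: rcons (y :: s) l) =
            path (adj_in e U) x (rcons (rcons (y :: s) l) x) by [].
  by rewrite rcons_path hp last_rcons -E ha.
apply: (IH y) => //.
- by case/andP: hp.
- by case/andP: hu.
Qed.

Lemma leaf_exists (U : {set T}) v : tree_in e U -> v \in U -> U :\ v != set0 ->
  exists l p, [/\ l \in U :\ v, p \in U, e l p = 1%N & forall z, z \in U -> z != p -> e l z = 0%N].
Proof.
case=> [[_ Hc] Hle Hnc] hv hne.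
pose P n := [exists s : n.-tuple T, path (adj_in e U) v s && uniq (v :: s)].
have P0 : P 0%N by apply/existsP; exists [tuple].
have Pub n : P n -> (n <= #|T|)%N.
  case/existsP => s /andP[_ hu].
  move/card_uniqP: hu => hc; have := max_card (mem (v :: s)).
  by rewrite hc /= size_tuple => /ltnW.
have Pin (s : seq T) : path (adj_in e U) v s -> uniq (v :: s) -> P (size s).
  by move=> h1 h2; apply/existsP; exists (in_tuple s); rewrite h1 h2.
case: (ex_maxnP (ex_intro P 0%N P0) Pub) => m Pm Mmax.
have [s [hp hu sz]] : exists s : seq T, [/\ path (adj_in e U) v s, uniq (v :: s) & size s = m].
  by case/existsP: Pm => s0 /andP[h1 h2]; exists s0; rewrite size_tuple.
case/lastP: s hp hu sz => [|s' l] hp hu sz.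
  case/set0Pn: hne => u /setD1P [nuv huU].
  case/connectP: (Hc v u hv huU) => q.
  case: q => [/= _ E2|a q /= /andP[ha _] _]; first by rewrite E2 eqxx in nuv.
  have P1 : P 1%N.
    by apply: (Pin [:: a]); rewrite /= ?ha // inE (adj_neq ha).
  by have := Mmax _ P1; rewrite -sz.
have hp0 := hp.
move: hp; rewrite rcons_path => /andP [hp' hpl].
set p := last v s' in hpl *.
case/and3P: (hpl) => hpU hlU hpl'.
have hlv : l != v.
  apply/eqP => E; move: hu; rewrite /= mem_rcons inE E eqxx /=; done.
exists l, p; split.
- by apply/setD1P.
- done.
- by have := Hle l p hlU hpU; rewrite Hsym in hpl'; lia.
move=> z hzU hzp; apply/eqP; rewrite -leqn0 leqNgt; apply/negP => hlz.
have ha : adj_in e U l z by rewrite /adj_in hlU hzU hlz.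
case: (boolP (z \in v :: rcons s' l)) => hz.
  have hzl : z != l by rewrite eq_sym (adj_neq ha).
  have hz' : z \in v :: s'.
    by move: hz; rewrite in_cons mem_rcons in_cons (negbTE hzl) /=.
  by apply: Hnc; apply: (cyc hp0 hu hz' hzp ha).
have Pn : P (size (rcons (rcons s' l) z)).
  apply: Pin; first by rewrite rcons_path hp0 last_rcons ha.
  by rewrite -rcons_cons rcons_uniq hz hu.
by have := Mmax _ Pn; rewrite !size_rcons -sz size_rcons ltnn.
Qed.

Lemma path_sub (U : {set T}) l x q : path (adj_in e U) x q -> x \in U :\ l -> l \notin q ->
  path (adj_in e (U :\ l)) x q.
Proof.
elim: q x => [//|b q IH] x /= /andP[/and3P[hx hb h] hp] hxl.
rewrite inE negb_or => /andP[nlb nlq].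
have hb' : b \in U :\ l by apply/setD1P; split; rewrite // eq_sym.
by rewrite /adj_in hxl hb' h /= IH.
Qed.

Lemma tree_sub (U : {set T}) l p : tree_in e U -> l \in U -> p \in U -> (0 < e l p)%N ->
  (forall z, z \in U -> z != p -> e l z = 0%N) -> U :\ l != set0 -> tree_in e (U :\ l).
Proof.
case=> [[_ Hc] Hle Hnc] hl hp hlp hz hne.
have sub : subrel (adj_in e (U :\ l)) (adj_in e U).
  move=> a b /and3P[ha hb h]; rewrite /adj_in h andbT.
  by move: ha hb; rewrite !inE => /andP[_ ->] /andP[_ ->].
split.
- split=> // x y hx hy.
  have [nxl hxU] := setD1P hx; have [nyl hyU] := setD1P hy.
  case/connectP: (Hc x y hxU hyU) => q hq Ey.
  rewrite Ey in nyl *.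
  case/shortenP: hq nyl => q' hq' uq _ nyl.
  apply/connectP; exists q' => //.
  apply: path_sub => //.
  apply/negP => hlq; move: hq' uq nyl; case/splitPr: hlq => q1 q2.
  rewrite cat_path => /andP[_ h12] uq.
  move: uq; rewrite -cat_cons cat_uniq => /and3P[_ /hasPn H _].
  case/andP: h12 => h1 h2.
  rewrite last_cat.
  case: q2 h2 H => [|b q2] h2 H; first by rewrite /= eqxx.
  move=> _; case/andP: h2 => /and3P[_ hbU hlb] _.
  case/and3P: h1 => haU _ hal; rewrite Hsym in hal.
  have Eb : b = p by case: (eqVneq b p) => // nbp; rewrite hz in hlb.
  have Ea : last x q1 = p by case: (eqVneq (last x q1) p) => // nap; rewrite hz in hal.
  have hb2 : b \in [:: l, b & q2] by rewrite !inE eqxx orbT.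
  by have := H b hb2; rewrite Eb -Ea mem_last.
- move=> x y hx hy; apply: Hle.
    by move: hx; rewrite inE => /andP[_ ->].
  by move: hy; rewrite inE => /andP[_ ->].
- case=> c [hc huc]; apply: Hnc; exists c; split=> //.
  move: huc; rewrite /ucycle => /andP[cy uc]; rewrite uc andbT.
  exact: (sub_cycle sub).
Qed.

Lemma lapD1 (W : {set T}) l w u : l \in W ->
  lap e W w u = lap e (W :\ l) w u + (if w == u then (e u l)%:Z else 0).
Proof.
move=> hl; rewrite /lap; case: (eqVneq w u) => [->|_]; last by rewrite addr0.
by rewrite (big_setD1 l hl) /= PoszD addrC.
Qed.

Lemma tree_solve n : forall (U : {set T}) v, #|U| = n -> tree_in e U -> v \in U ->
  forall g : T -> int, exists z : T -> int,
   (forall w, w \notin U :\ v -> z w = 0) /\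
   forall u, u \in U :\ v -> g u + \sum_(w in U) z w * lap e U w u = 0.
Proof.
elim: n => [|n IH] U v hn ht hv g; case: (eqVneq (U :\ v) set0) => [E|hne].
- by exists (fun _ => 0); split=> // u; rewrite E inE.
- by move/eqP: hn; rewrite cards_eq0 => /eqP E0; rewrite E0 inE in hv.
- by exists (fun _ => 0); split=> // u; rewrite E inE.
have [l [p [hl hp hlp hz]]] := leaf_exists ht hv hne.
case/setD1P: hl => nlv hlU.
have hv' : v \in U :\ l by apply/setD1P; split; rewrite // eq_sym.
have hn' : #|U :\ l| = n by move: hn; rewrite (cardsD1 l) hlU add1n => [[]].
have hpl : p != l by apply/eqP => E; rewrite E Hl0 in hlp.
have ht' : tree_in e (U :\ l).
  apply: (tree_sub ht hlU hp) => //; first by rewrite hlp.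
  by apply/set0Pn; exists v.
pose g' u := if u == p then g p + g l else g u.
have [z' [z0 hz']] := IH _ v hn' ht' hv' g'.
exists (fun w => if w == l then z' p - g l else z' w); split.
  move=> w hw; case: (eqVneq w l) => [E|nwl].
    by rewrite E in hw; case/negP: hw; apply/setD1P.
  apply: z0; apply: contra hw; rewrite !inE => /andP[-> /andP[_ ->]].
  by [].
move=> u hu; have [nuv huU] := setD1P hu.
rewrite (bigD1 l hlU) /= eqxx.
have -> : \sum_(w in U | w != l) (if w == l then z' p - g l else z' w) * lap e U w u =
          \sum_(w in U :\ l) z' w * lap e U w u.
  apply: eq_big; first by move=> w; rewrite in_setD1 andbC.
  by move=> w /andP[_ nwl]; rewrite (negbTE nwl).
have -> : \sum_(w in U :\ l) z' w * lap e U w u =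
   \sum_(w in U :\ l) z' w * lap e (U :\ l) w u +
   (if u \in U :\ l then z' u * (e u l)%:Z else 0).
  rewrite (eq_bigr (fun w => z' w * lap e (U :\ l) w u +
                         z' w * (if w == u then (e u l)%:Z else 0))); last first.
    by move=> w _; rewrite (lapD1 _ _ hlU) mulrDr.
  rewrite big_split /=; congr (_ + _).
  case: (boolP (u \in U :\ l)) => hu'.
    rewrite (bigD1 u) //= eqxx big1 ?addr0 // => w /andP[_ nwu].
    by rewrite (negbTE nwu) mulr0.
  apply: big1 => w hw; case: (eqVneq w u) => [E|_]; last by rewrite mulr0.
  by rewrite -E hw in hu'.
case: (eqVneq u l) => [E|nul].
  rewrite E setD11 addr0.
  have -> : lap e U l l = 1.
    by rewrite /lap eqxx (bigD1 p hp) /= hlp big1 ?addn0 // => w /andP[hw nwp]; apply: hz.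
  have hpU' : p \in U :\ l by apply/setD1P.
  rewrite (bigD1 p hpU') /= big1 ?addr0; last first.
    move=> w /andP[hw nwp]; have [nwl hwU] := setD1P hw.
    by rewrite /lap (negbTE nwl) Hsym (hz w hwU nwp) oppr0 mulr0.
  rewrite /lap (negbTE hpl) Hsym hlp.
  lia.
have hu' : u \in U :\ l by apply/setD1P.
have hu'' : u \in (U :\ l) :\ v by apply/setD1P.
have H := hz' u hu''.
have -> : lap e U l u = - (e l u)%:Z by rewrite /lap eq_sym (negbTE nul).
rewrite hu'.
case: (eqVneq u p) => [Eup|nup].
  move: H; rewrite /g' Eup eqxx hlp Hsym hlp.
  by move=> H; rewrite -[RHS]H; ring.
move: H; rewrite /g' (negbTE nup) (hz u huU nup) Hsym (hz u huU nup).
by rewrite oppr0 !mulr0 add0r addr0.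
Qed.

End Tree.

Section Decomp.
Variables (T : finType) (e : T -> T -> nat).
Hypothesis Hl0 : forall x, e x x = 0%N.
Hypothesis Hsym : forall x y, e x y = e y x.
Variables (v : T) (V1 U : {set T}).
Hypothesis HVU : V1 :|: U = setT.
Hypothesis HI : V1 :&: U = [set v].
Hypothesis Hno : forall x y, x \in V1 :\ v -> y \in U :\ v -> e x y = 0%N.

Lemma vV1 : v \in V1.
Proof. by have := set11 v; rewrite -HI inE => /andP[]. Qed.
Lemma vU : v \in U.
Proof. by have := set11 v; rewrite -HI inE => /andP[]. Qed.

Lemma inVU u : (u \in V1) || (u \in U).
Proof. by rewrite -in_setU HVU inE. Qed.

Lemma inboth u : u \in V1 -> u \in U -> u = v.
Proof. by move=> a b; apply/set1P; rewrite -HI inE a b. Qed.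

Lemma nin_V1 u : (u \notin V1) = (u \in U :\ v).
Proof.
rewrite in_setD1; case: (boolP (u \in V1)) => h /=.
  case: (boolP (u \in U)) => h2; last by rewrite andbF.
  by rewrite (inboth h h2) eqxx.
have := inVU u; rewrite (negbTE h) /= => hU; rewrite hU andbT.
by apply/esym/eqP => E; rewrite E vV1 in h.
Qed.

Lemma nin_U u : (u \notin U) = (u \in V1 :\ v).
Proof.
rewrite in_setD1; case: (boolP (u \in U)) => h /=.
  case: (boolP (u \in V1)) => h2; last by rewrite andbF.
  by rewrite (inboth h2 h) eqxx.
have := inVU u; rewrite (negbTE h) orbF => hV; rewrite hV andbT.
by apply/esym/eqP => E; rewrite E vU in h.
Qed.

Lemma e0 x y : x \in V1 :\ v -> y \in U :\ v -> e y x = 0%N.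
Proof. by move=> *; rewrite Hsym Hno. Qed.

Lemma splitT (R : Type) (idx : R) (op : Monoid.com_law idx) (F : T -> R) :
  \big[op/idx]_(z in setT) F z = op (\big[op/idx]_(z in V1) F z) (\big[op/idx]_(z in U :\ v) F z).
Proof.
rewrite (bigID (mem V1)) /=; apply: f_equal2.
  by apply: eq_bigl => z; rewrite inE.
by apply: eq_bigl => z; rewrite inE /= nin_V1.
Qed.


Lemma Posz_sum (A : {pred T}) (F : T -> nat) :
  ((\sum_(i in A) F i)%N)%:Z = \sum_(i in A) (F i)%:Z.
Proof. exact: (big_morph Posz PoszD (erefl _)). Qed.

Lemma degT_split u : (\sum_(z in setT) e u z = \sum_(z in V1) e u z + \sum_(z in U :\ v) e u z)%N.
Proof. exact: splitT. Qed.

Lemma sum0_V1 u : u \in V1 :\ v -> (\sum_(z in U :\ v) e u z = 0)%N.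
Proof. by move=> hu; apply: big1 => z hz; apply: Hno. Qed.

Lemma sumV1_U u : u \in U :\ v -> (\sum_(z in V1) e u z = e u v)%N.
Proof.
move=> hu; rewrite (big_setD1 v vV1) /= big1 ?addn0 // => z hz; exact: e0.
Qed.

Lemma sumU_v u : (\sum_(z in U) e u z = e u v + \sum_(z in U :\ v) e u z)%N.
Proof. by rewrite (big_setD1 v vU). Qed.

Lemma sumD1 (W : {set T}) u : u \in W -> (\sum_(z in W) e u z = \sum_(z in W | z != u) e u z)%N.
Proof. by move=> h; rewrite (bigD1 u) //= Hl0. Qed.

Lemma L2 u w : u \in U :\ v -> lap e setT w u = if w \in U then lap e U w u else 0.
Proof.
move=> hu; have huU : u \in U by case/setD1P: hu.
rewrite /lap. case: (eqVneq w u) => [E|nwu].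
  by rewrite E huU degT_split sumV1_U // sumU_v.
case: (boolP (w \in U)) => // hw; rewrite nin_U in hw.
by rewrite Hno.
Qed.

Lemma L1 u w : u \in V1 -> contract U v (lap e setT w) u = if w \in V1 then lap e V1 w u else 0.
Proof.
rewrite /contract; case: (eqVneq u v) => [->|nuv] hu.
  case: (eqVneq w v) => [->|nwv].
    rewrite vV1 (big_setD1 v vU) /= /lap eqxx.
    rewrite (eq_bigr (fun x => -(e v x)%:Z)); last first.
      by move=> x /setD1P [nx _]; rewrite eq_sym (negbTE nx).
    by rewrite sumrN -Posz_sum degT_split PoszD addrK.
  case: (boolP (w \in V1)) => hw.
    have hw' : w \in V1 :\ v by apply/setD1P.
    rewrite (eq_bigr (fun x => -(e w x)%:Z)); last first.
      move=> x hx; rewrite /lap; case: (eqVneq w x) => [E|//].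
      by rewrite -E in hx; case/eqP: nwv; apply: inboth.
    by rewrite sumrN -Posz_sum sumU_v sum0_V1 // addn0 /lap (negbTE nwv).
  have hw' := hw; rewrite nin_V1 in hw'.
  have hwU : w \in U by case/setD1P: hw'.
  rewrite (bigD1 w) //= /lap eqxx.
  rewrite (eq_bigr (fun x => -(e w x)%:Z)); last first.
    by move=> x /andP[_ nx]; rewrite eq_sym (negbTE nx).
  by rewrite sumrN -Posz_sum degT_split sumV1_U // -sumU_v (sumD1 hwU) subrr.
have hu' : u \in V1 :\ v by apply/setD1P.
rewrite /lap; case: (eqVneq w u) => [E|nwu].
  by rewrite E hu degT_split sum0_V1 // addn0.
case: (boolP (w \in V1)) => // hw; rewrite nin_V1 in hw.
by rewrite e0 // oppr0.
Qed.

Lemma rowsum (W : {set T}) u : u \in W -> \sum_(w in W) lap e W w u = 0.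
Proof.
move=> hu; rewrite (bigD1 u) //= /lap eqxx.
rewrite (eq_bigr (fun w => -(e w u)%:Z)); last first.
  by move=> w /andP[_ nw]; rewrite (negbTE nw).
rewrite sumrN -Posz_sum (sumD1 hu).
have -> : (\sum_(z in W | z != u) e u z = \sum_(i in W | i != u) e i u)%N.
  by apply: eq_bigr => *; rewrite Hsym.
by rewrite subrr.
Qed.

Lemma contract_lin (g x : T -> int) u :
  contract U v (fun u => g u + \sum_(w in setT) x w * lap e setT w u) u =
  contract U v g u + \sum_(w in setT) x w * contract U v (lap e setT w) u.
Proof.
rewrite /contract; case: (u == v) => //.
rewrite big_split /=; congr (_ + _).
rewrite exchange_big /=; apply: eq_bigr => w _; by rewrite mulr_sumr.
Qed.

Lemma contract_fire (g x : T -> int) u : u \in V1 ->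
  contract U v (fun u => g u + \sum_(w in setT) x w * lap e setT w u) u =
  contract U v g u + \sum_(w in V1) x w * lap e V1 w u.
Proof.
move=> hu; rewrite contract_lin; congr (_ + _).
rewrite [RHS]big_mkcond /=; apply: eq_big => [w|w _]; first by rewrite inE.
by rewrite L1 //; case: (w \in V1); rewrite ?mulr0.
Qed.

Lemma contract_id0 (f : T -> int) u : (forall w, w \in U :\ v -> f w = 0) -> u \in V1 ->
  contract U v f u = f u.
Proof.
move=> h hu; rewrite /contract; case: eqVneq => [->|//].
by rewrite (big_setD1 v vU) /= big1 ?addr0.
Qed.


Lemma Leff_ext (W : {set T}) (f f' : T -> int) : (forall u, u \in W -> f u = f' u) ->
  Leffective_in e W f -> Leffective_in e W f'.
Proof.
move=> h [g [[x hx] he]]; exists g; split=> //; exists x => u hu.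
by rewrite hx // h.
Qed.

Lemma Leff_fwd (g : T -> int) : Leffective_in e setT g -> Leffective_in e V1 (contract U v g).
Proof.
move=> [h [[x hx] he]]; exists (contract U v h); split.
  exists x => u hu; rewrite -contract_fire //.
  rewrite /contract; case: (u == v).
    by apply: eq_bigr => w _; apply: hx; rewrite inE.
  by apply: hx; rewrite inE.
move=> u hu; rewrite /contract; case: (u == v).
  by apply: sumr_ge0 => w _; apply: he; rewrite inE.
by apply: he; rewrite inE.
Qed.

Lemma Leff_bwd (Htree : forall g : T -> int, exists z : T -> int,
   (forall w, w \notin U :\ v -> z w = 0) /\
   forall u, u \in U :\ v -> g u + \sum_(w in U) z w * lap e U w u = 0)
  (g : T -> int) : Leffective_in e V1 (contract U v g) -> Leffective_in e setT g.
Proof.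
move=> [h' [[x hx] he]].
pose y w := if w \in V1 then x w else x v.
pose g1 u := g u + \sum_(w in setT) y w * lap e setT w u.
have [z [z0 hz]] := Htree g1.
pose h u := g u + \sum_(w in setT) (y w + z w) * lap e setT w u.
have hh u : h u = g1 u + \sum_(w in setT) z w * lap e setT w u.
  rewrite /h /g1 -addrA -big_split /=; congr (_ + _).
  by apply: eq_bigr => w _; rewrite mulrDl.
have hU u : u \in U :\ v -> h u = 0.
  move=> hu; rewrite hh -[RHS](hz u hu); congr (_ + _).
  rewrite [RHS]big_mkcond /=; apply: eq_big => [w|w _]; first by rewrite inE.
  by rewrite L2 //; case: (w \in U); rewrite ?mulr0.
have hV u : u \in V1 -> h u = h' u.
  move=> hu; rewrite -(contract_id0 hU hu).
  rewrite (contract_fire g (fun w => y w + z w) hu) hx //; congr (_ + _).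
  apply: eq_bigr => w hw; rewrite z0 ?addr0 /y ?hw //.
  by rewrite -nin_V1 hw.
exists h; split.
  by exists (fun w => y w + z w).
move=> u _; case: (boolP (u \in V1)) => hu.
  by rewrite hV //; apply: he.
by rewrite nin_V1 in hu; rewrite hU.
Qed.

Lemma rank_fwd (f : T -> int) r : rank_prop e setT f r -> rank_prop e V1 (contract U v f) r.
Proof.
move=> H lam hl hd.
pose lam' u := if u \in V1 then lam u else 0.
have := H lam' _ _.
have /[swap] /[apply] : effective_in setT lam'.
  by move=> u _; rewrite /lam'; case: ifP => h //; apply: hl.
have /[swap] /[apply] : deg_in setT lam' = r.
  rewrite /deg_in -hd /lam' [RHS]big_mkcond /=.
  by apply: eq_big => [w|w _]; first by rewrite inE.
move=> /Leff_fwd; apply: Leff_ext => u hu.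
rewrite /contract; case: (eqVneq u v) => [E|ne].
  rewrite sumrB E; congr (_ - _).
  rewrite (big_setD1 v vU) /= /lam' vV1 big1 ?addr0 // => w hw.
  by rewrite -nin_V1 in hw; rewrite (negbTE hw).
by rewrite /lam' hu.
Qed.

Lemma rank_bwd (Htree : forall g : T -> int, exists z : T -> int,
   (forall w, w \notin U :\ v -> z w = 0) /\
   forall u, u \in U :\ v -> g u + \sum_(w in U) z w * lap e U w u = 0)
  (f : T -> int) r : rank_prop e V1 (contract U v f) r -> rank_prop e setT f r.
Proof.
move=> H lam hl hd; apply: (Leff_bwd Htree).
have := H (contract U v lam).
have /[swap] /[apply] : effective_in V1 (contract U v lam).
  move=> u hu; rewrite /contract; case: (u == v).
    by apply: sumr_ge0 => *; apply: hl; rewrite inE.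
  by apply: hl; rewrite inE.
have /[swap] /[apply] : deg_in V1 (contract U v lam) = r.
  rewrite -hd /deg_in splitT (big_setD1 v vV1) /= (big_setD1 v vV1) /=.
  rewrite {1}/contract eqxx (big_setD1 v vU) /=.
  have -> : \sum_(i in V1 :\ v) contract U v lam i = \sum_(i in V1 :\ v) lam i.
    by apply: eq_bigr => i /setD1P [ni _]; rewrite /contract (negbTE ni).
  by rewrite addrAC.
move=> H1; apply: (Leff_ext _ H1) => u hu; rewrite /contract; case: (u == v) => //.
by rewrite sumrB.
Qed.

Lemma main_eq (Htree : forall g : T -> int, exists z : T -> int,
   (forall w, w \notin U :\ v -> z w = 0) /\
   forall u, u \in U :\ v -> g u + \sum_(w in U) z w * lap e U w u = 0)
  (f : T -> int) r : is_rank e setT f r <-> is_rank e V1 (contract U v f) r.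
Proof.
have LE : Leffective_in e setT f <-> Leffective_in e V1 (contract U v f).
  by split; [apply: Leff_fwd | apply: Leff_bwd].
have RP r' : rank_prop e setT f r' <-> rank_prop e V1 (contract U v f) r'.
  by split; [apply: rank_fwd | apply: rank_bwd].
rewrite /is_rank; split => [[[h1 h2]|[h1 [h2 [h3 h4]]]]|[[h1 h2]|[h1 [h2 [h3 h4]]]]].
- by left; split=> // /LE.
- right; split; first by apply/LE.
  split=> //; split; first by apply/RP.
  by move=> r' h0 /RP hr; apply: h4.
- by left; split=> // /LE.
- right; split; first by apply/LE.
  split=> //; split; first by apply/RP.
  by move=> r' h0 /RP hr; apply: h4.
Qed.

End Decomp.

Theorem mainTheorem3 (T : finType) (e : T -> T -> nat) (v : T) (V1 U : {set T})
  (f : T -> int) :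
  loopless_sym e -> connected_in e setT ->
  cut_vertex e v -> decomposes e v V1 U -> tree_in e U ->
  forall r : int, is_rank e setT f r <-> is_rank e V1 (contract U v f) r.
Proof.
move=> [Hl0 Hsym] _ _ [HVU HI _ _ Hno] ht r.
have hvU : v \in U by have := set11 v; rewrite -HI inE => /andP[].
apply: (main_eq Hl0 Hsym HVU HI Hno) => g.
exact: (tree_solve Hl0 Hsym (erefl _) ht hvU g).
Qed.
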